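(* Let $\rho>0$, $n\in\mathbb{Z}_+$, $t\ge 0$ and $p\in[0,1]$. For the ancestral chain started at $(a(0),b(0),c(0))=(n,0,1)$ with $s(0)=0$, $\mathbb{E}_{n,0,1,0}[p^{a(t)}\mid s(t)=0]=\tilde\nu_{n,0,1}(t)$, where $\tilde\nu_{n,0,1}(t)$ is $\nu_{n,0,1}(t)$ with $q=g=1$ and $\rho=0$ substituted.
   Context: The ancestral chain $(a(t),b(t),c(t))$ with parameter $\rho$ is the continuous-time Markov chain on $\mathbb{Z}_+^3\setminus\{\mathbf 0\}$ which from $(a,b,c)$ jumps to $(a+1,b+1,c-1)$ at rate $c\rho/2$ (a recombination event), to $(a-1,b-1,c+1)$ at rate $ab$, to $(a-1,b,c)$ at rate $ac+a(a-1)/2$, to $(a,b-1,c)$ at rate $bc+b(b-1)/2$, and to $(a,b,c-1)$ at rate $c(c-1)/2$; $s(t)$ counts recombination jumps in $(0,t)$. $\nu_{l,m,n}(t)=\mathbb{E}_{l,m,n}[p^{a(t)}q^{b(t)}g^{c(t)}]$ (equivalently, by moment duality, $\mathbb{E}_{p,q,g}[x(t)^ly(t)^mx_1(t)^n]$ for the two-locus two-allele Wright–Fisher diffusion with recombination parameter $\rho$ and initial allele frequencies $p,q$ and initial $A_1B_1$ gamete frequency $g$); it is a polynomial in $(p,q,g)$ whose coefficients depend on $\rho$ and $t$, and $\tilde\nu_{n,0,1}(t)$ is this polynomial evaluated at $q=g=1$, $\rho=0$. *)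

(* Defs.v *)
From HB Require Import structures.
From mathcomp Require Import all_boot all_order all_algebra.
From mathcomp Require Import all_classical all_reals all_analysis.
Set Implicit Arguments. Unset Strict Implicit. Unset Printing Implicit Defensive.
Import Order.TTheory GRing.Theory Num.Theory numFieldNormedType.Exports.
Local Open Scope ring_scope.

(* Augmented state (a, b, c, f) of the ancestral chain: f = true iff at least
   one recombination event has happened, i.e. f(t) = (s(t) > 0).
   The pair (a(t),b(t),c(t), s(t)>0) is itself a continuous-time Markov chain. *)
Definition state := (nat * nat * nat * bool)%type.

Definition moves {R : realType} (rho : R) (x : state) : seq (state * R) :=
  let: (a, b, c, f) := x in
  [:: ((a.+1, b.+1, c.-1, true), c%:R * rho / 2);
      ((a.-1, b.-1, c.+1, f), (a * b)%:R);
      ((a.-1, b, c, f), (a * c)%:R + (a * (a - 1))%:R / 2);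
      ((a, b.-1, c, f), (b * c)%:R + (b * (b - 1))%:R / 2);
      ((a, b, c.-1, f), (c * (c - 1))%:R / 2)].

Definition gen {R : realType} (rho : R) (x y : state) : R :=
  \sum_(m <- moves rho x | m.1 == y) m.2
  - (if x == y then \sum_(m <- moves rho x) m.2 else 0).

Definition box (A B C : nat) : seq state :=
  flatten [seq flatten [seq flatten [seq [:: (a, b, c, false); (a, b, c, true)]
                                    | c <- iota 0 C.+1]
                         | b <- iota 0 B.+1]
          | a <- iota 0 A.+1].

(* Box associated with the initial configuration (l,m,k): it contains the set
   {a + c <= l + k, b + c <= m + k} (x flag), which contains (l,m,k,_) and
   is closed under the dynamics (recombination and a-b coalescence preserve
   a+c and b+c, the other jumps decrease them). *)
Definition boxof (l m k : nat) : seq state := box (l + k) (m + k) (l + k).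

(* k-th power of the generator, with sums over a finite set of states S
   (exact for rows x in a closed subset of S). *)
Fixpoint genpow {R : realType} (S : seq state) (rho : R) (k : nat) (x y : state) : R :=
  match k with
  | 0 => (x == y)%:R
  | k'.+1 => \sum_(z <- S) gen rho x z * genpow S rho k' z y
  end.

Definition trans {R : realType} (S : seq state) (rho t : R) (x y : state) : R :=
  limn (series (fun k => t ^+ k / (k`!)%:R * genpow S rho k x y)).

Definition a_of (x : state) : nat := x.1.1.1.
Definition b_of (x : state) : nat := x.1.1.2.
Definition c_of (x : state) : nat := x.1.2.
Definition recombined (x : state) : bool := x.2.

Definition E_s0 {R : realType} (l m k : nat) (rho t p : R) : R :=
  \sum_(y <- boxof l m k | ~~ recombined y)
     trans (boxof l m k) rho t (l, m, k, false) y * p ^+ a_of y.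

Definition P_s0 {R : realType} (l m k : nat) (rho t : R) : R :=
  \sum_(y <- boxof l m k | ~~ recombined y)
     trans (boxof l m k) rho t (l, m, k, false) y.

Definition condE_s0 {R : realType} (l m k : nat) (rho t p : R) : R :=
  E_s0 l m k rho t p / P_s0 l m k rho t.

Definition nu {R : realType} (l m k : nat) (rho t p q g : R) : R :=
  \sum_(y <- boxof l m k)
     trans (boxof l m k) rho t (l, m, k, false) y
       * p ^+ a_of y * q ^+ b_of y * g ^+ c_of y.

Definition nu_tilde {R : realType} (l m k : nat) (t p : R) : R :=
  nu l m k 0 t p 1 1.

(* Main.v *)
Require Import Defs.
From HB Require Import structures.
From mathcomp Require Import all_boot all_order all_algebra.
From mathcomp Require Import all_classical all_reals all_analysis.
From mathcomp Require Import ring lra zify.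
Import Order.TTheory GRing.Theory Num.Theory numFieldNormedType.Exports.
Local Open Scope classical_set_scope.
Local Open Scope ring_scope.

Section Gen.
Variable R : realType.

Lemma sum_cvg (I : Type) (r : seq I) (u : I -> nat -> R) (l : I -> R) :
  (forall i, u i @ \oo --> l i) ->
  (fun k => \sum_(i <- r) u i k) @ \oo --> \sum_(i <- r) l i.
Proof.
move=> H; elim: r => [|i r IH].
  rewrite big_nil; under eq_fun do rewrite big_nil; exact: cvg_cst.
rewrite big_cons; under eq_fun do rewrite big_cons.
exact: cvgD.
Qed.

Lemma series_sum (I : Type) (r : seq I) (u : I -> nat -> R) :
  series (fun k => \sum_(i <- r) u i k) = (fun n => \sum_(i <- r) series (u i) n).
Proof.
apply/funext => n; rewrite /series /=; exact: exchange_big.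
Qed.

Lemma series_exp_cvg (c x t : R) :
  series (fun k => t ^+ k / (k`!)%:R * (c * x ^+ k)) @ \oo --> c * expR (x * t).
Proof.
have -> : series (fun k => t ^+ k / (k`!)%:R * (c * x ^+ k)) =
          (fun n => c * series (exp_coeff (x * t)) n).
  apply/funext => n; rewrite /series /= mulr_sumr; apply: eq_bigr => k _.
  rewrite /exp_coeff /= exprMn; ring.
apply: cvgMl_tmp; exact: is_cvg_series_exp_coeff.
Qed.

Lemma bounded_cvg (g : nat -> R) (K t : R) : 0 <= K ->
  (forall k, `|g k| <= K ^+ k) ->
  cvgn (series (fun k => t ^+ k / (k`!)%:R * g k)).
Proof.
move=> K0 Hg; apply: normed_cvg.
apply: (@series_le_cvg _ _ (exp_coeff (`|t| * K))).
- by move=> k /=.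
- by move=> k; apply: exp_coeff_ge0; rewrite mulr_ge0.
- move=> k /=; rewrite /exp_coeff /= exprMn !normrM normrX normfV normr_nat.
  by rewrite mulrAC ler_wpM2r ?invr_ge0 // ler_wpM2l ?exprn_ge0.
- have := is_cvg_series_exp_coeff (`|t| * K). exact.
Qed.

Lemma le_sum_mem (I : eqType) (r : seq I) (F : I -> R) x :
  x \in r -> (forall i, 0 <= F i) -> F x <= \sum_(i <- r) F i.
Proof.
elim: r => [//|i r IH]; rewrite in_cons big_cons => /orP[/eqP->|xr] F0.
  by rewrite lerDl sumr_ge0.
by rewrite (le_trans (IH xr F0)) // lerDr.
Qed.

End Gen.
Section Chain.
Variable R : realType.

Lemma sum_pick_iota N j (F : nat -> R) : (j < N)%N ->
  (forall i, i != j -> F i = 0) -> \sum_(i <- iota 0 N) F i = F j.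
Proof.
move=> jN H; rewrite (bigD1_seq j) ?mem_iota ?iota_uniq //=.
by rewrite big1 ?addr0 // => i /H.
Qed.

Lemma pick_box A B C a b c f (v : state -> R) :
  (a <= A)%N -> (b <= B)%N -> (c <= C)%N ->
  \sum_(z <- box A B C) ((a, b, c, f) == z)%:R * v z = v (a, b, c, f).
Proof.
move=> hA hB hC; rewrite /box big_flatten big_map (@sum_pick_iota _ a) ?ltnS //.
  rewrite big_flatten big_map (@sum_pick_iota _ b) ?ltnS //.
    rewrite big_flatten big_map (@sum_pick_iota _ c) ?ltnS //.
      by rewrite !big_cons big_nil; case: f; rewrite !xpair_eqE !eqxx /=;
        rewrite ?mul1r ?mul0r ?addr0 ?add0r.
    move=> c' nc; rewrite !big_cons big_nil !xpair_eqE [c == c']eq_sym (negbTE nc).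
    by rewrite !andbF !mul0r /= !addr0.
  move=> b' nb; rewrite big_flatten big_map big1 // => c' _.
  rewrite !big_cons big_nil !xpair_eqE [b == b']eq_sym (negbTE nb).
  by rewrite ?andbF ?andFb !mul0r /= !addr0.
move=> a' na; rewrite big_flatten big_map big1 // => b' _.
rewrite big_flatten big_map big1 // => c' _.
rewrite !big_cons big_nil !xpair_eqE [a == a']eq_sym (negbTE na).
by rewrite ?andbF ?andFb !mul0r /= !addr0.
Qed.

Lemma gen_rec (rho : R) z z' : recombined z -> ~~ recombined z' -> gen rho z z' = 0.
Proof.
case: z => [[[a b] c] f]; case: z' => [[[a' b'] c'] f'] /= -> /negPf ->.
rewrite /gen /moves !big_cons big_nil /= !xpair_eqE /= !andbF /=.
by rewrite subr0.
Qed.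

Lemma genpow_rec S (rho : R) k z y : recombined z -> ~~ recombined y ->
  genpow S rho k z y = 0.
Proof.
elim: k z => [|k IH] z zr yr /=.
  by case: eqP => // zy; move: yr; rewrite -zy zr.
rewrite big1 // => z' _; case: (boolP (recombined z')) => z'r.
  by rewrite IH ?mulr0.
by rewrite gen_rec ?mul0r.
Qed.

Lemma genE S (rho : R) x (V : state -> R) :
  \sum_(z <- S) gen rho x z * V z =
  \sum_(m <- moves rho x) m.2 * (\sum_(z <- S) (m.1 == z)%:R * V z)
  - (\sum_(m <- moves rho x) m.2) * (\sum_(z <- S) (x == z)%:R * V z).
Proof.
rewrite /gen; under eq_bigr do rewrite mulrBl.
rewrite sumrB; congr (_ - _).
  under eq_bigr do rewrite big_mkcond /= mulr_suml.
  rewrite exchange_big /=; apply: eq_bigr => m _; rewrite mulr_sumr.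
  by apply: eq_bigr => z _; case: eqP => _; rewrite ?mul1r ?mul0r ?mulr0.
rewrite mulr_sumr; apply: eq_bigr => z _.
by case: eqP => _; rewrite ?mul1r ?mul0r ?mulr0.
Qed.

Definition Tv S (rho : R) (V : state -> R) k x :=
  \sum_(y <- S) genpow S rho k x y * V y.

Lemma TvS S (rho : R) V k x :
  Tv S rho V k.+1 x = \sum_(z <- S) gen rho x z * Tv S rho V k z.
Proof.
rewrite /Tv /=; under eq_bigr do rewrite mulr_suml.
rewrite exchange_big /=; apply: eq_bigr => z _; rewrite mulr_sumr.
by apply: eq_bigr => y _; rewrite mulrA.
Qed.


Definition mu (a : nat) : R := (a * 1)%:R + (a * (a - 1))%:R / 2.

Lemma step_w (rho : R) n (V : state -> R) a : (a <= n)%N ->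
  (rho = 0 \/ forall z, recombined z -> V z = 0) ->
  \sum_(z <- boxof n 0 1) gen rho (a,0,1,false)%N z * V z =
  mu a * V (a.-1,0,1,false)%N - (rho / 2 + mu a) * V (a,0,1,false)%N.
Proof.
move=> an H; rewrite genE.
have hp : forall a' f (v : state -> R), (a' <= n.+1)%N ->
   \sum_(z <- boxof n 0 1) ((a', 0, 1, f)%N == z)%:R * v z = v (a', 0, 1, f)%N.
  by move=> a' f v ha; rewrite /boxof pick_box ?addn1.
move: (boxof n 0 1) hp => S hp.
rewrite /moves /= !big_cons big_nil /= !hp; try lia.
have -> : 1 * rho / 2 * \sum_(z <- S) ((a.+1, 1%N, 0%N, true) == z)%:R * V z = 0.
  case: H => [->|H]; first by rewrite mulr0 !mul0r.
  rewrite big1 ?mulr0 // => z _; case: eqP => [<-|_]; last by rewrite mul0r.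
  by rewrite H ?mulr0.
rewrite muln0 !mul0n subnn muln0 big_nil /mu; ring.
Qed.


Lemma mu0 : mu 0 = 0.
Proof. by rewrite /mu !mul0n mul0r addr0. Qed.

Lemma mu_lt i j : (i < j)%N -> mu i < mu j.
Proof.
move=> ij; rewrite /mu !muln1; apply: ltr_leD; first by rewrite ltr_nat.
rewrite ler_pM2r ?invr_gt0 ?ltr0n // ler_nat leq_mul ?leq_sub2r //; exact: ltnW.
Qed.

Fixpoint coef (p : R) (a i : nat) : R :=
  match a with
  | 0 => (i == 0)%:R
  | a'.+1 => if (i <= a')%N then mu a'.+1 * coef p a' i / (mu a'.+1 - mu i)
             else p ^+ a'.+1 -
               \sum_(j < a'.+1) mu a'.+1 * coef p a' j / (mu a'.+1 - mu j)
  end.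

Lemma decomp (H : nat -> nat -> R) s p n :
  (forall a, (a <= n)%N -> H 0%N a = p ^+ a) ->
  (forall k a, (a <= n)%N -> H k.+1 a = mu a * H k a.-1 - (s + mu a) * H k a) ->
  forall a, (a <= n)%N -> forall k,
    H k a = \sum_(i < a.+1) coef p a i * (- (s + mu i)) ^+ k.
Proof.
move=> H0 HS; elim=> [|a IHa] an k.
  rewrite big_ord1 /= mul1r mu0 addr0; elim: k => [|k IHk].
    by rewrite H0 // !expr0.
  by rewrite HS // IHk mu0 addr0 exprS; ring.
have IH := IHa (ltnW an).
elim: k => [|k IHk].
  rewrite H0 // big_ord_recr /= ltnn.
  under eq_bigr => i _ do rewrite -ltnS ltn_ord expr0 mulr1.
  by rewrite expr0 mulr1 addrC subrK.
rewrite HS // IHk /= IH [\sum_(i < a.+2) _]big_ord_recr [\sum_(i < a.+2) _]big_ord_recr /= ltnn.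
set e := (p ^+ a.+1 - _).
have key : forall i : 'I_a.+1,
  (if (i <= a)%N then mu a.+1 * coef p a i / (mu a.+1 - mu i) else e) *
    (- (s + mu i)) ^+ k.+1 =
  mu a.+1 * (coef p a i * (- (s + mu i)) ^+ k) -
  (s + mu a.+1) * ((if (i <= a)%N then mu a.+1 * coef p a i / (mu a.+1 - mu i) else e) *
    (- (s + mu i)) ^+ k).
  move=> i; rewrite -ltnS ltn_ord exprS.
  have hne : mu a.+1 - mu i != 0 by rewrite subr_eq0 gt_eqF // mu_lt.
  by field.
rewrite (eq_bigr _ (fun i _ => key i)) sumrB -!mulr_sumr exprS; ring.
Qed.


Lemma pick_w n a f (v : state -> R) : (a <= n.+1)%N ->
   \sum_(z <- boxof n 0 1) ((a, 0, 1, f)%N == z)%:R * v z = v (a, 0, 1, f)%N.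
Proof. by move=> ha; rewrite /boxof pick_box ?addn1. Qed.

Lemma genpow_bound S (rho : R) x y :
  exists M, 0 <= M /\ forall k, `|genpow S rho k x y| <= M ^+ k.
Proof.
pose K := \sum_(x' <- S) \sum_(z <- S) `|gen rho x' z|.
pose Kx := \sum_(z <- S) `|gen rho x z|.
have K0 : 0 <= K by rewrite sumr_ge0 // => ? _; rewrite sumr_ge0.
have Kx0 : 0 <= Kx by rewrite sumr_ge0.
have b0 : forall z, `|genpow S rho 0 z y| <= 1.
  by move=> z /=; case: eqP => _; rewrite ?normr1 ?normr0.
have step : forall k z, `|genpow S rho k.+1 z y| <=
    \sum_(z' <- S) `|gen rho z z'| * `|genpow S rho k z' y|.
  by move=> k z /=; apply: (le_trans (ler_norm_sum _ _ _)); apply: ler_sum => z' _; rewrite normrM.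
have HS : forall k z, z \in S -> `|genpow S rho k z y| <= K ^+ k.
  elim=> [|k IH] z zS; first by rewrite expr0.
  apply: (le_trans (step _ _)).
  apply: (@le_trans _ _ ((\sum_(z' <- S) `|gen rho z z'|) * K ^+ k)).
    rewrite mulr_suml big_seq [X in _ <= X]big_seq; apply: ler_sum => z' z'S.
    by rewrite ler_wpM2l // IH.
  rewrite exprS ler_wpM2r ?exprn_ge0 //.
  by apply: (@le_sum_mem _ _ _ (fun x' => \sum_(z <- S) `|gen rho x' z|)) => // i; rewrite sumr_ge0.
exists (1 + K + Kx); split; first by rewrite !addr_ge0.
case=> [|k]; first by rewrite expr0.
apply: (le_trans (step _ _)).
apply: (@le_trans _ _ (Kx * K ^+ k)).
  rewrite /Kx mulr_suml big_seq [X in _ <= X]big_seq; apply: ler_sum => z' z'S.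
  by rewrite ler_wpM2l // HS.
rewrite exprS; apply: ler_pM => //; first exact: exprn_ge0.
  by lra.
by apply: lerXn2r => //; rewrite ?nnegrE ?addr_ge0 //; lra.
Qed.

Lemma trans_series S (rho t : R) x y :
  series (fun k => t ^+ k / (k`!)%:R * genpow S rho k x y) @ \oo --> trans S rho t x y.
Proof.
have [M [M0 HM]] := genpow_bound S rho x y.
exact: (@bounded_cvg R _ _ t M0 HM).
Qed.

Lemma trans_sum S (rho t : R) x (V : state -> R) :
  series (fun k => t ^+ k / (k`!)%:R * Tv S rho V k x) @ \oo -->
  \sum_(y <- S) trans S rho t x y * V y.
Proof.
have -> : series (fun k => t ^+ k / (k`!)%:R * Tv S rho V k x) =
  (fun n => \sum_(y <- S) series (fun k => t ^+ k / (k`!)%:R * genpow S rho k x y) n * V y).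
  apply/funext => m; rewrite /series /Tv /=.
  under eq_bigr do rewrite mulr_sumr.
  rewrite exchange_big /=; apply: eq_bigr => y _; rewrite mulr_suml.
  by apply: eq_bigr => k _; rewrite mulrA.
apply: sum_cvg => y; apply: cvgMr_tmp; exact: trans_series.
Qed.

Lemma lim_uniq (f : nat -> R) (a b : R) : f @ \oo --> a -> f @ \oo --> b -> a = b.
Proof. move=> A B; exact: (@cvg_unique R^o _ _ _ a b A B). Qed.


Definition hrec (p : R) (y : state) : R := (~~ recombined y)%:R * p ^+ a_of y.

Lemma Tv_rec S (rho : R) p k z : recombined z -> Tv S rho (hrec p) k z = 0.
Proof.
move=> zr; rewrite /Tv big1 // => y _; rewrite /hrec.
case: (boolP (recombined y)) => yr; first by rewrite /= !mul0r mulr0.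
by rewrite genpow_rec ?mul0r.
Qed.

Lemma E_form n (rho t p : R) :
  E_s0 n 0 1 rho t p =
  \sum_(i < n.+1) coef p n i * expR (- (rho / 2 + mu i) * t).
Proof.
set S := boxof n 0 1.
have A := trans_sum S rho t (n, 0, 1, false)%N (hrec p).
have hE : E_s0 n 0 1 rho t p = \sum_(y <- S) trans S rho t (n, 0, 1, false)%N y * hrec p y.
  rewrite /E_s0 big_mkcond; apply: eq_bigr => y _; rewrite /hrec.
  by case: (recombined y); rewrite /= ?mul0r ?mulr0 ?mul1r.
rewrite hE.
have D := @decomp (fun k a => Tv S rho (hrec p) k (a, 0, 1, false)%N) (rho / 2) p n.
have /(_ n (leqnn n)) HD : forall a, (a <= n)%N -> forall k,
    Tv S rho (hrec p) k (a, 0, 1, false)%N =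
    \sum_(i < a.+1) coef p a i * (- (rho / 2 + mu i)) ^+ k.
  apply: D.
    by move=> a an; rewrite /Tv /= pick_w // ?ltnS 1?ltnW // /hrec /= mul1r.
  move=> k a an; rewrite TvS step_w //; right => z; exact: Tv_rec.
have B : series (fun k => t ^+ k / (k`!)%:R * Tv S rho (hrec p) k (n, 0, 1, false)%N) @ \oo
   --> \sum_(i < n.+1) coef p n i * expR (- (rho / 2 + mu i) * t).
  under eq_fun do rewrite HD mulr_sumr.
  rewrite series_sum; apply: sum_cvg => i; exact: series_exp_cvg.
exact: lim_uniq A B.
Qed.


Lemma P_form n (rho t : R) : P_s0 n 0 1 rho t = expR (- (rho / 2) * t).
Proof.
set S := boxof n 0 1.
have A := trans_sum S rho t (n, 0, 1, false)%N (hrec 1).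
have hE : P_s0 n 0 1 rho t = \sum_(y <- S) trans S rho t (n, 0, 1, false)%N y * hrec 1 y.
  rewrite /P_s0 big_mkcond; apply: eq_bigr => y _; rewrite /hrec expr1n.
  by case: (recombined y); rewrite /= ?mul0r ?mulr0 ?mul1r ?mulr1.
rewrite hE.
have HD : forall k a, (a <= n)%N ->
    Tv S rho (hrec 1) k (a, 0, 1, false)%N = (- (rho / 2)) ^+ k.
  elim=> [|k IH] a an.
    by rewrite /Tv /= pick_w // ?ltnS 1?ltnW // /hrec /= mul1r expr1n.
  rewrite TvS step_w //; last by right => z; exact: Tv_rec.
  rewrite !IH // ?(leq_trans (leq_pred a)) // exprS; ring.
have B : series (fun k => t ^+ k / (k`!)%:R * Tv S rho (hrec 1) k (n, 0, 1, false)%N) @ \oo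
   --> expR (- (rho / 2) * t).
  under eq_fun do rewrite HD // -[(- (rho / 2)) ^+ _]mul1r.
  have := @series_exp_cvg R 1 (- (rho / 2)) t; rewrite mul1r; exact.
exact: lim_uniq A B.
Qed.

Lemma nu_form n (t p : R) :
  nu_tilde n 0 1 t p = \sum_(i < n.+1) coef p n i * expR (- (0 / 2 + mu i) * t).
Proof.
set S := boxof n 0 1.
pose g (y : state) : R := p ^+ a_of y.
have A := trans_sum S 0 t (n, 0, 1, false)%N g.
have hE : nu_tilde n 0 1 t p = \sum_(y <- S) trans S 0 t (n, 0, 1, false)%N y * g y.
  by rewrite /nu_tilde /nu; apply: eq_bigr => y _; rewrite !expr1n !mulr1.
rewrite hE.
have D := @decomp (fun k a => Tv S 0 g k (a, 0, 1, false)%N) (0 / 2) p n.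
have /(_ n (leqnn n)) HD : forall a, (a <= n)%N -> forall k,
    Tv S 0 g k (a, 0, 1, false)%N =
    \sum_(i < a.+1) coef p a i * (- (0 / 2 + mu i)) ^+ k.
  apply: D.
    by move=> a an; rewrite /Tv /= pick_w // ?ltnS 1?ltnW.
  move=> k a an; rewrite TvS step_w //; by left.
have B : series (fun k => t ^+ k / (k`!)%:R * Tv S 0 g k (n, 0, 1, false)%N) @ \oo
   --> \sum_(i < n.+1) coef p n i * expR (- (0 / 2 + mu i) * t).
  under eq_fun do rewrite HD mulr_sumr.
  rewrite series_sum; apply: sum_cvg => i; exact: series_exp_cvg.
exact: lim_uniq A B.
Qed.

End Chain.

Theorem mainTheorem5 (R : realType) (rho : R) (n : nat) (t p : R) :
  0 < rho -> 0 <= t -> 0 <= p <= 1 ->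
  condE_s0 n 0 1 rho t p = nu_tilde n 0 1 t p.
Proof.
move=> _ _ _; rewrite /condE_s0 E_form P_form nu_form.
have -> : \sum_(i < n.+1) coef R p n i * expR (- (rho / 2 + mu R i) * t) =
  (\sum_(i < n.+1) coef R p n i * expR (- (0 / 2 + mu R i) * t)) * expR (- (rho / 2) * t).
  rewrite mulr_suml; apply: eq_bigr => i _; rewrite -mulrA -expRD; congr (_ * expR _).
  rewrite mul0r; ring.
by rewrite mulfK // gt_eqF // expR_gt0.
Qed.
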